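(* In the SquaredEquality formula $EQ^2(n)$, every universal literal occurrence ($u_i$, $\overline{u_i}$, $v_j$, $\overline{v_j}$) in every clause is a QRAT-literal, and hence can be removed from its clause by the QRATU rule.
   Context: A QBF $Q.\phi$ has quantifier prefix $Q$ and CNF matrix $\phi$; $k\le_Q \ell$ means the variable of $k$ is quantified at or to the left of the block of $\ell$. The SquaredEquality formula is $EQ^2(n) := Q(n).eq^2(n)$ with prefix $Q(n) := \exists\{x_1,y_1,\dots,x_n,y_n\}\,\forall\{u_1,v_1,\dots,u_n,v_n\}\,\exists\{t_{i,j} : i,j\in[n]\}$ and matrix consisting of the clauses $\{x_i,y_j,u_i,v_j,t_{i,j}\}$, $\{x_i,\overline{y_j},u_i,\overline{v_j},t_{i,j}\}$, $\{\overline{x_i},y_j,\overline{u_i},v_j,t_{i,j}\}$, $\{\overline{x_i},\overline{y_j},\overline{u_i},\overline{v_j},t_{i,j}\}$ for $i,j\in[n]$, and the clause $(\overline{t_{i,j}} : i,j\in[n])$. Unit propagation on a CNF $F$ repeatedly sets unit-clause literals true (removing satisfied clauses and deleting false literals) until no unit clause remains or the empty clause appears. A clause $C$ is an asymmetric tautology (AT) w.r.t. $\phi$ if unit propagation on $\phi\wedge\overline{C}$ derives the empty clause (in particular every tautological clause is an AT). The outer resolvent of $C\vee\ell$ and $D\vee\overline{\ell}$ is $OR(Q,C,D,\ell) := C\cup\{k\in D : k\le_Q \ell\}$. A literal $\ell$ is a QRAT-literal in the clause $C\vee\ell$ w.r.t. $Q.\phi$ if for every clause $D\vee\overline{\ell}\in\phi$,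 $OR(Q,C,D,\ell)$ is an AT w.r.t. $\phi$. The QRATU rule of the QRAT proof system allows deleting a universal QRAT-literal from its clause. *)

(* Defs.v *)
From HB Require Import structures.
From mathcomp Require Import all_boot.
Set Implicit Arguments. Unset Strict Implicit. Unset Printing Implicit Defensive.

Inductive var :=
| X of nat | Y of nat | U of nat | V of nat | T of nat & nat.

Definition var_eqb (a b : var) : bool :=
  match a, b with
  | X i, X j | Y i, Y j | U i, U j | V i, V j => i == j
  | T i j, T k l => (i == k) && (j == l)
  | _, _ => false
  end.

Lemma var_eqP : Equality.axiom var_eqb.
Proof.
case=> [i|i|i|i|i j] [k|k|k|k|k l] /=; try (by constructor);
  try (by apply: (iffP eqP) => [->|[]]).
by apply: (iffP andP) => [[/eqP-> /eqP->]|[-> ->]].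
Qed.

HB.instance Definition _ := hasDecEq.Build var var_eqP.

(* A literal is a variable with a polarity (true = positive). *)
Definition lit := (var * bool)%type.
Definition neg (l : lit) : lit := (l.1, ~~ l.2).
Definition clause := seq lit.   (* read as a set of literals *)
Definition cnf := seq clause.

Inductive quant := Ex | All.
Definition quant_eqb (a b : quant) :=
  match a, b with Ex, Ex | All, All => true | _, _ => false end.
Lemma quant_eqP : Equality.axiom quant_eqb.
Proof. by case; case; constructor. Qed.
HB.instance Definition _ := hasDecEq.Build quant quant_eqP.

Definition prefix := seq (quant * seq var).

(* index of the block quantifying v (size Q if v is not quantified) *)
Definition block_idx (Q : prefix) (v : var) : nat :=
  find (fun b : quant * seq var => v \in b.2) Q.

Definition leQ (Q : prefix) (k l : lit) : bool :=
  block_idx Q k.1 <= block_idx Q l.1.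

Definition is_universal (Q : prefix) (l : lit) : bool :=
  has (fun b : quant * seq var => (b.1 == All) && (l.1 \in b.2)) Q.

Definition assign (F : cnf) (l : lit) : cnf :=
  [seq [seq k <- C | k != neg l] | C <- F & l \notin C].

Inductive up_refutes : cnf -> Prop :=
| up_empty F : [::] \in F -> up_refutes F
| up_unit F l : [:: l] \in F -> up_refutes (assign F l) -> up_refutes F.

Definition neg_clause (C : clause) : cnf := [seq [:: neg k] | k <- C].

Definition AT (phi : cnf) (C : clause) : Prop := up_refutes (phi ++ neg_clause C).

Definition outer_resolvent (Q : prefix) (C D : clause) (l : lit) : clause :=
  C ++ [seq k <- D | leQ Q k l].

(* l is a QRAT-literal in the clause C \/ l w.r.t. Q.phi : for every clause
   D \/ ~l of phi (D = the clause with ~l removed), OR(Q,C,D,l) is an AT. *)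
Definition QRAT_lit (Q : prefix) (phi : cnf) (C : clause) (l : lit) : Prop :=
  forall E, E \in phi -> neg l \in E ->
    AT phi (outer_resolvent Q C [seq k <- E | k != neg l] l).

(* The SquaredEquality formula EQ^2(n), indices i, j ranging over 0..n-1 *)
Definition idx (n : nat) := iota 0 n.

Definition Qn (n : nat) : prefix :=
  [:: (Ex, flatten [seq [:: X i; Y i] | i <- idx n]);
      (All, flatten [seq [:: U i; V i] | i <- idx n]);
      (Ex, [seq T i j | i <- idx n, j <- idx n])].

Definition eq2_clauses (i j : nat) : seq clause :=
  [:: [:: (X i, true);  (Y j, true);  (U i, true);  (V j, true);  (T i j, true)];
      [:: (X i, true);  (Y j, false); (U i, true);  (V j, false); (T i j, true)];
      [:: (X i, false); (Y j, true);  (U i, false); (V j, true);  (T i j, true)];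
      [:: (X i, false); (Y j, false); (U i, false); (V j, false); (T i j, true)]].

Definition eq2 (n : nat) : cnf :=
  flatten [seq eq2_clauses i j | i <- idx n, j <- idx n]
  ++ [:: [seq (T i j, false) | i <- idx n, j <- idx n]].

(* Main.v *)
Require Import Defs.
From mathcomp Require Import all_boot.

Lemma eq2_inv n E : E \in eq2 n ->
  (exists i j, E \in eq2_clauses i j) \/ E = [seq (T i j, false) | i <- idx n, j <- idx n].
Proof.
rewrite /eq2 mem_cat => /orP [|]; last by rewrite inE => /eqP ->; right.
move=> /flattenP [s /flattenP [s' /mapP [i _ ->] /mapP [j _ ->]] HE]; left; by exists i, j.
Qed.

Lemma partner i j E a b : E \in eq2_clauses i j ->
  ((U a, b) \in E -> (X a, b) \in E) /\ ((V a, b) \in E -> (Y a, b) \in E).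
Proof.
rewrite !inE => /or4P [] /eqP -> ; rewrite !inE /=; split.
all: by move=> /orP [/eqP [-> ->]|/eqP //]; rewrite eqxx.
Qed.

Lemma tclause_noUV n a b :
  (U a, b) \notin [seq (T i j, false) | i <- idx n, j <- idx n] /\
  (V a, b) \notin [seq (T i j, false) | i <- idx n, j <- idx n].
Proof.
split; apply/negP => /flattenP [s /mapP [i _ ->] /mapP [j _ //]].
Qed.

Lemma univ_inv n l : is_universal (Qn n) l -> exists a, a < n /\ (l.1 = U a \/ l.1 = V a).
Proof.
rewrite /is_universal /= orbF => /flattenP [s /mapP [a Ha ->]].
rewrite !inE => /orP [] /eqP ->; exists a; rewrite mem_iota in Ha; split => //; by [left|right].
Qed.

Lemma AT_taut phi C k : k \in C -> neg k \in C -> AT phi C.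
Proof.
move=> Hk Hnk; rewrite /AT.
apply: (@up_unit _ k).
  rewrite mem_cat; apply/orP; right; apply/mapP; exists (neg k) => //.
  by rewrite /neg /= negbK -surjective_pairing.
apply: up_empty; apply/mapP.
exists [:: neg k].
  rewrite mem_filter; apply/andP; split.
    rewrite inE; case: k {Hk Hnk} => v c; rewrite /neg /= xpair_eqE eqxx /=; by case: c.
  by rewrite mem_cat; apply/orP; right; apply/mapP; exists k.
by rewrite /= eqxx.
Qed.

Lemma leQ_X n a b l : a < n -> leQ (Qn n) (X a, b) l.
Proof.
move=> Ha; rewrite /leQ /block_idx /=.
suff -> : X a \in flatten [seq [:: X i; Y i] | i <- idx n] by [].
apply/flattenP; exists [:: X a; Y a]; last by rewrite inE eqxx.
by apply/mapP; exists a => //; rewrite mem_iota.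
Qed.

Lemma leQ_Y n a b l : a < n -> leQ (Qn n) (Y a, b) l.
Proof.
move=> Ha; rewrite /leQ /block_idx /=.
suff -> : Y a \in flatten [seq [:: X i; Y i] | i <- idx n] by [].
apply/flattenP; exists [:: X a; Y a]; last by rewrite !inE eqxx orbT.
by apply/mapP; exists a => //; rewrite mem_iota.
Qed.

Theorem lemma9 (n : nat) :
  forall E, E \in eq2 n ->
  forall l, l \in E -> is_universal (Qn n) l ->
    QRAT_lit (Qn n) (eq2 n) [seq k <- E | k != l] l.
Proof.
move=> E HE [v b] Hl /univ_inv [a [Ha Hv]] E' HE' Hn.
case: (@eq2_inv _ _ HE) => [[i [j HEij]]|HET]; last first.
  by case: Hv => /= Hv; subst v; move: Hl; rewrite HET;
     case: (tclause_noUV n a b) => H1 H2; rewrite ?(negbTE H1) ?(negbTE H2).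
case: (@eq2_inv _ _ HE') => [[i' [j' HEij']]|HET]; last first.
  by case: Hv => /= Hv; subst v; move: Hn; rewrite HET /neg /=;
     case: (tclause_noUV n a (~~ b)) => H1 H2; rewrite ?(negbTE H1) ?(negbTE H2).
rewrite /neg /= in Hn.
case: Hv => /= Hv; subst v.
- apply: (@AT_taut _ _ (X a, b)).
    by rewrite mem_cat mem_filter (proj1 (@partner _ _ _ a b HEij) Hl).
  rewrite mem_cat; apply/orP; right.
  rewrite mem_filter leQ_X // mem_filter /= (proj1 (@partner _ _ _ a (~~ b) HEij') Hn) //.
- apply: (@AT_taut _ _ (Y a, b)).
    by rewrite mem_cat mem_filter (proj2 (@partner _ _ _ a b HEij) Hl).
  rewrite mem_cat; apply/orP; right.
  rewrite mem_filter leQ_Y // mem_filter /= (proj2 (@partner _ _ _ a (~~ b) HEij') Hn) //.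
Qed.
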